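(* Let $G$ be a bipartite TRVG with a rectangle representation in which the rectangles of one part are $g_1,\dots,g_p$ ($p\ge 1$) and the rectangles of the other part are $r_1,\dots,r_q$. If, for each $i\in\{1,\dots,p\}$, $g_i$ sees exactly $\alpha_i$ of the rectangles $r_1,\dots,r_q$ horizontally, then \[ q\ \ge\ \alpha_1+\alpha_2+\cdots+\alpha_p-(p-1). \]
   Context: A graph $G$ is a transparent rectangle visibility graph (TRVG) if its vertices can be represented by a collection of pairwise non-overlapping rectangles in the plane whose sides are parallel to the coordinate axes, one per vertex, such that two distinct vertices are adjacent if and only if there is a horizontal or a vertical line intersecting the interiors of both of their rectangles (other rectangles do not block visibility). Two rectangles see each other horizontally if some horizontal line meets the interiors of both. *)

(* Defs.v *)
From mathcomp Require Import all_boot.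
From Stdlib Require Import Reals.

Record rect := Rect { rx1 : R; rx2 : R; ry1 : R; ry2 : R }.

Definition rect_ok (a : rect) : Prop := (rx1 a < rx2 a)%R /\ (ry1 a < ry2 a)%R.

Definition in_interior (a : rect) (x y : R) : Prop :=
  (rx1 a < x < rx2 a)%R /\ (ry1 a < y < ry2 a)%R.

Definition overlap (a b : rect) : Prop :=
  exists x y, in_interior a x y /\ in_interior b x y.

Definition sees_h (a b : rect) : Prop :=
  exists t, (exists x, in_interior a x t) /\ (exists x', in_interior b x' t).

Definition sees_v (a b : rect) : Prop :=
  exists t, (exists y, in_interior a t y) /\ (exists y', in_interior b t y').

Definition sees (a b : rect) : Prop := sees_h a b \/ sees_v a b.

(* Main.v *)
Require Import Defs.
From mathcomp Require Import all_boot.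
From Stdlib Require Import Reals Lra ClassicalEpsilon.

Definition pb (P : Prop) : bool := if excluded_middle_informative P then true else false.
Lemma pbP (P : Prop) : reflect P (pb P).
Proof. rewrite /pb; case: excluded_middle_informative => H; by constructor. Qed.


Lemma exmin (T : eqType) (hi : T -> R) (s : seq T) : s <> [::] ->
  exists2 u, u \in s & forall v, v \in s -> (hi u <= hi v)%R.
Proof.
elim: s => [//|x s IH] _.
case: s IH => [|y s] IH.
  exists x; first by rewrite inE. move=> v; rewrite inE => /eqP ->; lra.
have [u us Hu] := IH ltac:(by []).
case: (Rle_dec (hi x) (hi u)) => H.
  exists x; first by rewrite inE eqxx.
  move=> v; rewrite inE => /orP [/eqP ->|/Hu]; lra.
exists u; first by rewrite inE us orbT.
move=> v; rewrite inE => /orP [/eqP ->|/Hu]; lra.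
Qed.

Definition intv {T : Type} (lo hi : T -> R) (u v : T) : Prop :=
  exists t, (lo u < t < hi u)%R /\ (lo v < t < hi v)%R.

Definition Edges {T : finType} (c : T -> bool) (lo hi : T -> R) (A : {set T}) :=
  [set e : T * T | [&& e.1 \in A, e.2 \in A, c e.1, ~~ c e.2 & pb (intv lo hi e.1 e.2)]].

Lemma core (T : finType) (c : T -> bool) (lo hi : T -> R)
  (Hdis : forall u v, u <> v -> c u = c v -> ~ intv lo hi u v) :
  forall n (A : {set T}), (#|A| <= n)%N -> A != set0 -> (#|Edges c lo hi A| < #|A|)%N.
Proof.
elim=> [|n IH] A HA A0.
  by move: HA; rewrite leqn0 cards_eq0 (negbTE A0).
have [u uA Hu] : exists2 u, u \in A & forall v, v \in A -> (hi u <= hi v)%R.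
  have [u us Hu] := @exmin _ hi (enum A) ltac:(
    by move=> E; move/set0Pn: A0 => [x]; rewrite -mem_enum E).
  by exists u; [rewrite -mem_enum | move=> v vA; apply: Hu; rewrite mem_enum].
pose I := [set e in Edges c lo hi A | (e.1 == u) || (e.2 == u)].
have EU : Edges c lo hi A = Edges c lo hi (A :\ u) :|: I.
  apply/setP => e; rewrite !inE.
  case: (e.1 =P u) => [->|n1]; case: (e.2 =P u) => [->|n2] /=;
  rewrite ?andbT ?andbF ?orbF ?orbT //=.
have I1 : (#|I| <= 1)%N.
  apply/card_le1_eqP => e e'; rewrite !inE.
  have key : forall f, f \in Edges c lo hi A -> (f.1 == u) || (f.2 == u) ->
     exists w, [/\ w \in A, c w = ~~ c u, intv lo hi u w &
        f = if c u then (u, w) else (w, u)].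
    move=> [f1 f2]; rewrite inE /= => /and5P [f1A f2A cf1 cf2 /pbP Hi] /orP [/eqP E|/eqP E];
      subst.
      exists f2; split => //; first by rewrite cf1 (negbTE cf2).
      by rewrite cf1.
    exists f1; split => //; first by rewrite cf1 (negbTE cf2).
    by case: Hi => t [h1 h2]; exists t.
    by rewrite (negbTE cf2).
  move=> /andP [eE eu] /andP [eE' eu'].
  have eE1 : e \in Edges c lo hi A by rewrite inE.
  have eE2 : e' \in Edges c lo hi A by rewrite inE.
  have [w [wA cw iw ->]] := key _ eE1 eu.
  have [w' [wA' cw' iw' ->]] := key _ eE2 eu'.
  have -> : w = w'; last by [].
  apply: NNPP => ne; apply: (Hdis w w' ne); first by rewrite cw cw'.
  have h1 := Hu _ wA; have h2 := Hu _ wA'.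
  case: iw => t1 [[a1 b1] [c1 d1]]; case: iw' => t2 [[a2 b2] [c2 d2]].
  exists (Rmax t1 t2); split; split;
  apply Rmax_case_strong; intros; lra.
rewrite EU.
apply: (leq_ltn_trans (leq_card_setU _ _).1).
have cardA : #|A| = #|A :\ u|.+1 by rewrite (cardsD1 u A) uA.
case: (boolP (A :\ u == set0)) => [/eqP D0|D0].
  have -> : Edges c lo hi (A :\ u) = set0.
    apply/setP => e; rewrite [in LHS]inE D0 !inE; by [].
  rewrite cards0 add0n.
  have -> : I = set0.
    apply/setP => -[e1 e2]; rewrite !inE /=.
    apply/negbTE; apply/negP => /andP [/and5P [e1A e2A ce1 ce2 _] H].
    have Hx : forall x, x \in A -> x = u.
      move=> x xA; apply/eqP; apply: contraT => xu.
      have : x \in A :\ u by rewrite !inE xu xA.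
      by rewrite D0 inE.
    by move: ce2; rewrite (Hx _ e2A) -(Hx _ e1A) ce1.
  by rewrite cards0 cardA.
have := IH (A :\ u) ltac:(by rewrite -ltnS -cardA) D0.
rewrite cardA => h2; rewrite ltnS.
apply: leq_trans (leq_add (leqnn _) I1) _; by rewrite addn1.
Qed.
Lemma cnt (I J : finType) (P : I -> J -> bool) :
  \sum_(i : I) #|[set j | P i j]| = #|[set e : I * J | P e.1 e.2]|.
Proof.
rewrite -sum1_card.
under eq_bigr => i _ do rewrite -sum1_card.
rewrite pair_big_dep /=.
apply: eq_bigl => e; by rewrite !inE.
Qed.

Lemma sees_h_iff (a b : rect) : rect_ok a -> rect_ok b ->
  sees_h a b <-> exists t, (ry1 a < t < ry2 a)%R /\ (ry1 b < t < ry2 b)%R.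
Proof.
move=> [ha1 ha2] [hb1 hb2]; split.
  by move=> [t [[x [_ H1]] [x' [_ H2]]]]; exists t.
move=> [t [H1 H2]]; exists t; split.
  exists ((rx1 a + rx2 a)/2)%R; split => //; lra.
exists ((rx1 b + rx2 b)/2)%R; split => //; lra.
Qed.

Theorem lemma2 (p q : nat) (g : 'I_p -> rect) (r : 'I_q -> rect)
  (alpha : 'I_p -> nat) :
  (0 < p)%N ->
  (forall i, rect_ok (g i)) -> (forall j, rect_ok (r j)) ->
  (* pairwise non-overlapping rectangles *)
  (forall i i', i <> i' -> ~ overlap (g i) (g i')) ->
  (forall j j', j <> j' -> ~ overlap (r j) (r j')) ->
  (forall i j, ~ overlap (g i) (r j)) ->
  (* the represented TRVG is bipartite with parts {g_i} and {r_j} *)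
  (forall i i', i <> i' -> ~ sees (g i) (g i')) ->
  (forall j j', j <> j' -> ~ sees (r j) (r j')) ->
  (* g_i sees exactly alpha_i of the r_j horizontally *)
  (forall i, exists S : {set 'I_q},
      #|S| = alpha i /\ (forall j, j \in S <-> sees_h (g i) (r j))) ->
  (\sum_(i < p) alpha i <= q + (p - 1))%N.
Proof.
move=> p0 gok rok _ _ _ gs rs HS.
pose P i j := pb (sees_h (g i) (r j)).
have Ha : forall i, alpha i = #|[set j | P i j]|.
  move=> i; have [S [<- HSi]] := HS i; apply: eq_card => j.
  rewrite inE; apply/idP/pbP => /HSi //.
rewrite (eq_bigr _ (fun i _ => Ha i)) cnt.
pose T := ('I_p + 'I_q)%type.
pose c (t : T) := if t is inl _ then true else false.
pose rt (t : T) := match t with inl i => g i | inr j => r j end.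
pose lo t := ry1 (rt t). pose hi t := ry2 (rt t).
have Hdis : forall u v, u <> v -> c u = c v -> ~ intv lo hi u v.
  move=> [i|j] [i'|j'] //= ne _ Hi.
    have ne' : i <> i' by move=> E; apply: ne; rewrite E.
    apply: (gs _ _ ne'); left; apply/sees_h_iff => //.
  have ne' : j <> j' by move=> E; apply: ne; rewrite E.
  apply: (rs _ _ ne'); left; apply/sees_h_iff => //.
have := @core _ c lo hi Hdis #|[set: T]| setT (leqnn _)
  ltac:(by apply/set0Pn; exists (inl (Ordinal p0)); rewrite inE).
rewrite cardsT card_sum !card_ord => H.
have Hle : (#|[set e : 'I_p * 'I_q | P e.1 e.2]| <= #|Edges c lo hi setT|)%N.
  rewrite -(card_imset _ (f := fun e : 'I_p * 'I_q => (inl e.1, inr e.2) : T * T)).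
    apply: subset_leq_card; apply/subsetP => x /imsetP [[i j]].
    rewrite inE /= => /pbP Hij ->; rewrite !inE /=; apply/pbP.
    by have [t Ht] := (proj1 (@sees_h_iff _ _ (gok i) (rok j))) Hij; exists t.
  by move=> [i j] [i' j'] [-> ->].
apply: (leq_trans Hle); rewrite -ltnS; apply: (leq_trans H).
case: p p0 {g gok gs HS Ha P T c rt lo hi Hdis H Hle} alpha => // p' _ _; rewrite subSS subn0. by rewrite addSn addnC.
Qed.
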